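(* For all $k\in\mathbb N$: (a) for all $f:\Xi_k\to\mathbb R$ and $g:\Xi_{k-1}\to\mathbb R$, $$\langle \mathfrak a_k g,f\rangle_{\alpha,k}=\frac{k}{|\alpha|+k-1}\langle g,\mathfrak a^\dagger_{k-1}f\rangle_{\alpha,k-1};$$ (b) $L^2(\mu_{\alpha,k})=\mathrm{Im}\,\mathfrak a_k\oplus\mathrm{Ker}\,\mathfrak a^\dagger_{k-1}$, an orthogonal direct sum.
   Context: $V$ is a finite set, $\alpha=(\alpha_x)_{x\in V}$ positive, $|\alpha|=\sum_x\alpha_x$. $\Xi_k:=\{\eta\in\mathbb N_0^V:\sum_x\eta_x=k\}$, $\Xi_0=\{0\}$ (functions on it are constants). $\mu_{\alpha,k}(\eta)=Z_{\alpha,k}^{-1}\prod_x\frac{\Gamma(\alpha_x+\eta_x)}{\Gamma(\alpha_x)\eta_x!}$ with $Z_{\alpha,k}=\frac{\Gamma(|\alpha|+k)}{\Gamma(|\alpha|)k!}$ (a probability measure on $\Xi_k$), and $\langle f,g\rangle_{\alpha,k}=\sum_{\eta\in\Xi_k}\mu_{\alpha,k}(\eta)f(\eta)g(\eta)$, defining $L^2(\mu_{\alpha,k})$. The annihilation operator $\mathfrak a_k:\mathbb R^{\Xi_{k-1}}\to\mathbb R^{\Xi_k}$ is $\mathfrak a_kg(\eta)=\sum_x\eta_x\,g(\eta-\delta_x)$ (terms with $\eta_x=0$ vanish), and the creation operator $\mathfrak a^\dagger_{k-1}:\mathbb R^{\Xi_k}\to\mathbb R^{\Xi_{k-1}}$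 is $\mathfrak a^\dagger_{k-1}f(\xi)=\sum_x(\xi_x+\alpha_x)f(\xi+\delta_x)$. *)

(* Defs.v *)
From HB Require Import structures.
From mathcomp Require Import all_boot all_order all_algebra.
Set Implicit Arguments. Unset Strict Implicit. Unset Printing Implicit Defensive.
Import Order.TTheory GRing.Theory Num.Theory.
Local Open Scope ring_scope.

Section Defs.
Variables (R : realFieldType) (V : finType).

Definition conf := {ffun V -> nat}.

Definition inXi (k : nat) (eta : conf) : bool := (\sum_(x : V) eta x)%N == k.

(* sum of F over the finite set Xi_k (each eta in Xi_k has eta_x <= k) *)
Definition sumXi (k : nat) (F : conf -> R) : R :=
  \sum_(e : {ffun V -> 'I_k.+1} | (\sum_(x : V) (e x : nat))%N == k)
     F [ffun x => nat_of_ord (e x)].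

(* rising factorial  a (a+1) ... (a+n-1) = Gamma(a+n)/Gamma(a) *)
Definition rising (a : R) (n : nat) : R := \prod_(i < n) (a + i%:R).

Definition abs_alpha (alpha : V -> R) : R := \sum_(x : V) alpha x.

(* Z_{alpha,k} = Gamma(|alpha|+k) / (Gamma(|alpha|) k!) *)
Definition Zak (alpha : V -> R) (k : nat) : R :=
  rising (abs_alpha alpha) k / (k`!)%:R.

Definition mu (alpha : V -> R) (k : nat) (eta : conf) : R :=
  (Zak alpha k)^-1 * \prod_(x : V) (rising (alpha x) (eta x) / ((eta x)`!)%:R).

Definition inner (alpha : V -> R) (k : nat) (f g : conf -> R) : R :=
  sumXi k (fun eta => mu alpha k eta * f eta * g eta).

Definition conf_sub (eta : conf) (x : V) : conf := [ffun y => (eta y - (y == x))%N].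
Definition conf_add (eta : conf) (x : V) : conf := [ffun y => (eta y + (y == x))%N].

Definition ann (g : conf -> R) : conf -> R :=
  fun eta => \sum_(x : V) (eta x)%:R * g (conf_sub eta x).

Definition cre (alpha : V -> R) (f : conf -> R) : conf -> R :=
  fun xi => \sum_(x : V) ((xi x)%:R + alpha x) * f (conf_add xi x).

End Defs.

(* Main.v *)
Require Import Defs.
From HB Require Import structures.
From mathcomp Require Import all_boot all_order all_algebra.
From mathcomp Require Import ring lra zify.
From Stdlib Require Import FunctionalExtensionality.
Import Order.TTheory GRing.Theory Num.Theory.
Local Open Scope ring_scope.
Set Implicit Arguments. Unset Strict Implicit.

Section S1.
Variables (R : realFieldType) (V : finType).

Definition conv {n : nat} (e : {ffun V -> 'I_n}) : conf V := [ffun x => nat_of_ord (e x)].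

Lemma conv_inj n : injective (@conv n).
Proof.
move=> e1 e2 /ffunP H; apply/ffunP => x; apply: val_inj.
by have := H x; rewrite !ffunE.
Qed.

Lemma le_sum_one (eta : conf V) x : (eta x <= \sum_y eta y)%N.
Proof. by rewrite (bigD1 x) //= leq_addr. Qed.

Lemma le_sum_two (eta : conf V) x y : x != y -> (eta x + eta y <= \sum_z eta z)%N.
Proof.
move=> nxy; rewrite (bigD1 x) //= leq_add2l (bigD1 y) /=; last by rewrite eq_sym.
exact: leq_addr.
Qed.

Lemma conv_surj k (eta : conf V) : inXi k eta -> exists e : {ffun V -> 'I_k.+1}, conv e = eta.
Proof.
rewrite /inXi => /eqP H.
exists [ffun x => inord (eta x)]; apply/ffunP => x; rewrite !ffunE inordK //.
by rewrite ltnS -H le_sum_one.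
Qed.

Lemma inXi_conv n k (e : {ffun V -> 'I_n}) :
  inXi k (conv e) = ((\sum_x (e x : nat))%N == k).
Proof. by rewrite /inXi; congr (_ == _); apply: eq_bigr => x _; rewrite ffunE. Qed.

Lemma sumXiE k (F : conf V -> R) :
  sumXi k F = \sum_(e : {ffun V -> 'I_k.+1}) (if inXi k (conv e) then F (conv e) else 0).
Proof. by rewrite /sumXi big_mkcond; apply: eq_bigr => e _; rewrite inXi_conv. Qed.

Lemma sumXi_eq k (F G : conf V -> R) :
  (forall eta, inXi k eta -> F eta = G eta) -> sumXi k F = sumXi k G.
Proof.
move=> H; rewrite !sumXiE; apply: eq_bigr => e _.
by case: ifP => // /H ->.
Qed.

Lemma sumXi_lin k (F G : conf V -> R) c :
  sumXi k (fun e => F e + c * G e) = sumXi k F + c * sumXi k G.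
Proof.
rewrite /sumXi big_split /= mulr_sumr //.
Qed.

Lemma sumXi_sum k (F : V -> conf V -> R) :
  sumXi k (fun e => \sum_x F x e) = \sum_x sumXi k (F x).
Proof. by rewrite /sumXi exchange_big. Qed.

Lemma sumXi_scal k (F : conf V -> R) c :
  sumXi k (fun e => c * F e) = c * sumXi k F.
Proof. by rewrite /sumXi mulr_sumr. Qed.

Lemma sumXi_ge0_eq0 k (F : conf V -> R) :
  (forall eta, inXi k eta -> 0 <= F eta) -> sumXi k F = 0 ->
  forall eta, inXi k eta -> F eta = 0.
Proof.
move=> Hp H0 eta /[dup] /conv_surj [e <-] He.
rewrite /sumXi in H0.
have := @psumr_eq0P R _ (fun e : {ffun V -> 'I_k.+1} => (\sum_x (e x : nat))%N == k)
   (fun e => F (conv e)).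
apply => //; last by rewrite -inXi_conv.
by move=> i Hi; apply: Hp; rewrite inXi_conv.
Qed.

Lemma sumXi_delta k (F : conf V -> R) xi : inXi k xi ->
  sumXi k (fun eta => if eta == xi then F eta else 0) = F xi.
Proof.
move=> /[dup] /conv_surj [e0 <-] He0.
rewrite sumXiE (bigD1 e0) //= He0 eqxx big1 ?addr0 // => e ne.
case: ifP => // _; case: ifP => // /eqP /conv_inj E.
by rewrite E eqxx in ne.
Qed.

Lemma sum_reindex (T T' : finType) (h : T -> T') (F : T' -> R) :
  injective h -> (forall i, F i != 0 -> exists j, h j = i) ->
  \sum_i F i = \sum_j F (h j).
Proof.
move=> hinj Him.
rewrite (bigID (fun i => i \in [set h j | j in T])) /=.
rewrite [X in _ + X]big1 ?addr0.
  rewrite big_imset //; by move=> a b _ _ /hinj.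
move=> i Hi; apply/eqP; apply: contraNT Hi => /Him [j <-].
by apply/imsetP; exists j.
Qed.

End S1.

Section S2.
Variables (R : realFieldType) (V : finType) (alpha : V -> R).
Hypothesis alpha_pos : forall x, 0 < alpha x.

Lemma rising_gt0 (a : R) n : 0 < a -> 0 < rising a n.
Proof.
move=> ha; apply: prodr_gt0 => i _; have := ler0n R i; lra.
Qed.

Lemma risingS (a : R) n : rising a n.+1 = rising a n * (a + n%:R).
Proof. by rewrite /rising big_ord_recr. Qed.

Lemma abs_alpha_ge x : alpha x <= abs_alpha alpha.
Proof.
rewrite /abs_alpha (bigD1 x) //= lerDl; apply: sumr_ge0 => y _.
exact: ltW.
Qed.

Lemma mu_gt0 k eta : 0 < abs_alpha alpha -> 0 < mu alpha k eta.
Proof.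
move=> hA; rewrite /mu; apply: mulr_gt0.
  rewrite invr_gt0 /Zak; apply: divr_gt0; first exact: rising_gt0.
  by rewrite ltr0n fact_gt0.
apply: prodr_gt0 => y _; apply: divr_gt0; first exact: rising_gt0.
by rewrite ltr0n fact_gt0.
Qed.

Lemma mu_add k (xi : conf V) x :
  mu alpha k.+1 (conf_add xi x) * (xi x).+1%:R
  = k.+1%:R / (abs_alpha alpha + k.+1%:R - 1) * mu alpha k xi * ((xi x)%:R + alpha x).
Proof.
have hA : 0 < abs_alpha alpha by apply: lt_le_trans (abs_alpha_ge x).
rewrite /mu (bigD1 x) //= [in RHS](bigD1 x) //=.
have -> : \prod_(i | i != x) (rising (alpha i) (conf_add xi x i) / (conf_add xi x i)`!%:R)
   = \prod_(i | i != x) (rising (alpha i) (xi i) / (xi i)`!%:R).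
  by apply: eq_bigr => i /negbTE ni; rewrite ffunE ni addn0.
rewrite ffunE eqxx addn1 risingS factS natrM /Zak risingS factS natrM.
set P := \prod_(_ | _) _.
have h1 : rising (abs_alpha alpha) k != 0 by rewrite gt_eqF // rising_gt0.
have h2 : abs_alpha alpha + k%:R != 0 by rewrite gt_eqF //; have := ler0n R k; lra.
have h3 : rising (alpha x) (xi x) != 0 by rewrite gt_eqF // rising_gt0.
have h4 : (k`!)%:R != 0 :> R by rewrite pnatr_eq0 -lt0n fact_gt0.
have h5 : ((xi x)`!)%:R != 0 :> R by rewrite pnatr_eq0 -lt0n fact_gt0.
have h6 : (xi x).+1%:R != 0 :> R by rewrite pnatr_eq0.
have h7 : k.+1%:R != 0 :> R by rewrite pnatr_eq0.
have h8 : abs_alpha alpha + k.+1%:R - 1 != 0.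
  by rewrite -natr1 addrA addrK.
field.
rewrite -!natr1 in h6 h7 h8 *.
by rewrite h5 h4 h1 !(addrC 1) h8 h6 h7.
Qed.

End S2.

Section S3.
Variables (R : realFieldType) (V : finType) (alpha : V -> R).
Hypothesis alpha_pos : forall x, 0 < alpha x.

Definition phi {k} (x : V) (e : {ffun V -> 'I_k.+1}) : {ffun V -> 'I_k.+2} :=
  [ffun y => if y == x then lift ord0 (e y) else widen_ord (leqnSn _) (e y)].

Lemma conv_phi k x e : conv (phi x e) = conf_add (@conv _ k.+1 e) x.
Proof.
apply/ffunP => y; rewrite !ffunE; case: (y =P x) => _.
  by rewrite lift0 addn1.
by rewrite addn0.
Qed.

Lemma phi_inj k x : injective (@phi k x).
Proof.
move=> e1 e2 E; apply: (@conv_inj V k.+1).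
apply/ffunP => y; have := congr1 (fun e => conv e y) E.
rewrite !conv_phi !ffunE; case: (y == x); rewrite ?addn1 ?addn0 //.
by case.
Qed.

Lemma inXi_add k (xi : conf V) x : inXi k.+1 (conf_add xi x) = inXi k xi.
Proof.
rewrite /inXi.
have -> : (\sum_y conf_add xi x y = (\sum_y xi y) + 1)%N.
  rewrite (bigD1 x) //= [in RHS](bigD1 x) //= ffunE eqxx.
  rewrite (eq_bigr (fun y => xi y)); first by rewrite addn1 addnS addSn addn0.
  by move=> y /negbTE ny; rewrite ffunE ny addn0.
by rewrite addn1 eqSS.
Qed.

Lemma sub_add (xi : conf V) x : conf_sub (conf_add xi x) x = xi.
Proof. by apply/ffunP => y; rewrite !ffunE addnK. Qed.

Lemma perx k g f x :
  sumXi k.+1 (fun eta => mu alpha k.+1 eta * ((eta x)%:R * g (conf_sub eta x)) * f eta)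
  = k.+1%:R / (abs_alpha alpha + k.+1%:R - 1) *
    sumXi k (fun xi => mu alpha k xi * g xi * (((xi x)%:R + alpha x) * f (conf_add xi x))).
Proof.
rewrite !sumXiE mulr_sumr (@sum_reindex R _ _ (@phi k x) _ (@phi_inj k x)); last first.
  move=> e'; case: ifP => Hin; last by rewrite eqxx.
  rewrite ffunE.
  case: (posnP (e' x)) => [-> | px]; first by rewrite mul0r mulr0 mul0r eqxx.
  move=> _.
  have Hs : (\sum_y (e' y : nat))%N = k.+1 by move: Hin; rewrite inXi_conv => /eqP.
  have Hs' : (\sum_y [ffun z => (e' z : nat)] y)%N = k.+1.
    by rewrite (eq_bigr (fun z => (e' z : nat))) // => z _; rewrite ffunE.
  exists [ffun y => inord (e' y - (y == x))].
  apply/ffunP => y; apply: val_inj; rewrite !ffunE.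
  case: (y =P x) => [->|/eqP nyx].
    have := le_sum_one [ffun z => (e' z : nat)] x; rewrite Hs' ffunE => h.
    rewrite /= /bump leq0n add1n inordK; [by rewrite subn1 prednK | by rewrite subn1 -ltnS prednK].
  have := le_sum_two [ffun z => (e' z : nat)] nyx; rewrite Hs' !ffunE => h.
  rewrite /= inordK subn0 //; move: h px; move: (nat_of_ord (e' y)) (nat_of_ord (e' x)) => a b; lia.
apply: eq_bigr => e _.
rewrite conv_phi inXi_add; case: ifP => _; last by rewrite mulr0.
rewrite sub_add ffunE eqxx addn1.
have := @mu_add R V alpha alpha_pos k (conv e) x.
move=> H.
transitivity ((mu alpha k.+1 (conf_add (conv e) x) * (conv e x).+1%:R) * g (conv e) * f (conf_add (conv e) x)).
  ring.
rewrite H; ring.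
Qed.

End S3.

Section S4.
Variables (R : realFieldType) (V : finType) (alpha : V -> R).
Hypothesis alpha_pos : forall x, 0 < alpha x.

Lemma sumXi_ext k (F G : conf V -> R) :
  (forall eta, F eta = G eta) -> sumXi k F = sumXi k G.
Proof. by move=> H; apply: sumXi_eq => eta _; apply: H. Qed.

Lemma partA k (f g : conf V -> R) :
  inner alpha k.+1 (ann g) f
  = k.+1%:R / (abs_alpha alpha + k.+1%:R - 1) * inner alpha k g (cre alpha f).
Proof.
rewrite /inner.
rewrite (@sumXi_ext _ _ (fun eta => \sum_x
   mu alpha k.+1 eta * ((eta x)%:R * g (conf_sub eta x)) * f eta)); last first.
  by move=> eta; rewrite /ann mulr_sumr mulr_suml.
rewrite [sumXi k _](@sumXi_ext _ _ (fun xi => \sum_x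
   mu alpha k xi * g xi * (((xi x)%:R + alpha x) * f (conf_add xi x)))); last first.
  by move=> xi; rewrite /cre mulr_sumr.
rewrite !sumXi_sum mulr_sumr; apply: eq_bigr => x _.
exact: perx.
Qed.

End S4.

Section S5.
Variables (R : realFieldType) (V : finType) (alpha : V -> R).
Hypothesis alpha_pos : forall x, 0 < alpha x.

Definition lc (u : conf V -> R) (c : R) (w : conf V -> R) : conf V -> R :=
  fun e => u e + c * w e.

Lemma A_pos_of k (eta : conf V) : inXi k.+1 eta -> 0 < abs_alpha alpha.
Proof.
case: (pickP (@predT V)) => [x0 _ | V0].
  by move=> _; apply: lt_le_trans (abs_alpha_ge alpha_pos x0).
rewrite /inXi big1 // => x; by have := V0 x.
Qed.

Lemma inner_zero k (u w : conf V -> R) :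
  (forall eta, inXi k eta -> u eta = 0) -> inner alpha k u w = 0.
Proof.
move=> H; rewrite /inner (@sumXi_eq _ _ _ _ (fun e => 0 * w e)).
  by rewrite sumXi_scal mul0r.
by move=> eta /H ->; rewrite mulr0 !mul0r.
Qed.

Lemma inner_self0 k (u : conf V -> R) :
  inner alpha k.+1 u u = 0 -> forall eta, inXi k.+1 eta -> u eta = 0.
Proof.
move=> H eta Heta.
have hA := A_pos_of Heta.
have Hp : forall e, inXi k.+1 e -> 0 <= mu alpha k.+1 e * u e * u e.
  move=> e He; have hm := mu_gt0 alpha_pos k.+1 e (A_pos_of He).
  rewrite -mulrA; apply: mulr_ge0; [exact: ltW | nra].
have E := @sumXi_ge0_eq0 R V k.+1 (fun e => mu alpha k.+1 e * u e * u e) Hp H eta Heta.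
have hm := mu_gt0 alpha_pos k.+1 eta hA.
move/eqP: E; rewrite -mulrA mulf_eq0 (gt_eqF hm) /= mulf_eq0 orbb.
by move/eqP.
Qed.

Lemma inner_sym k (u v : conf V -> R) : inner alpha k u v = inner alpha k v u.
Proof. by apply: sumXi_ext => e; rewrite mulrAC. Qed.

Lemma inner_lcl k u c w v :
  inner alpha k (lc u c w) v = inner alpha k u v + c * inner alpha k w v.
Proof.
rewrite /inner -sumXi_lin; apply: sumXi_ext => e; rewrite /lc; ring.
Qed.

Lemma inner_lcr k v u c w :
  inner alpha k v (lc u c w) = inner alpha k v u + c * inner alpha k v w.
Proof. by rewrite inner_sym inner_lcl !(inner_sym _ v). Qed.

Lemma ann_lc g1 c g2 : ann (lc g1 c g2) = lc (ann g1) c (ann g2).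
Proof.
apply: functional_extensionality => eta.
rewrite /ann /lc mulr_sumr -big_split /=; apply: eq_bigr => x _; ring.
Qed.

Variables (I : eqType) (F : I -> conf V -> R).

Fixpoint Span (s : seq I) (g : conf V -> R) : Prop :=
  match s with
  | [::] => g = (fun _ => 0)
  | i :: s' => exists a g1, Span s' g1 /\ g = lc g1 a (F i)
  end.

Lemma Span0 s : Span s (fun _ => 0).
Proof.
elim: s => [|u s IH] //=; exists 0, (fun _ => 0); split => //.
by apply: functional_extensionality => e; rewrite /lc; ring.
Qed.

Lemma Span_lc s g1 c g2 : Span s g1 -> Span s g2 -> Span s (lc g1 c g2).
Proof.
elim: s g1 g2 => [|u s IH] g1 g2 /=.
  move=> -> ->; apply: functional_extensionality => e; rewrite /lc; ring.
move=> [a1 [h1 [S1 ->]]] [a2 [h2 [S2 ->]]].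
exists (a1 + c * a2), (lc h1 c h2); split; first exact: IH.
by apply: functional_extensionality => e; rewrite /lc; ring.
Qed.

Lemma Span_mem s u : u \in s -> Span s (F u).
Proof.
elim: s => [|v s IH] //=; rewrite in_cons => /orP [/eqP -> | Hu].
  exists 1, (fun _ => 0); split; first exact: Span0.
  by apply: functional_extensionality => e; rewrite /lc; ring.
exists 0, (F u); split; first exact: IH.
by apply: functional_extensionality => e; rewrite /lc; ring.
Qed.

Lemma GS k s f : exists g, Span s g /\
  forall g', Span s g' -> inner alpha k.+1 (ann g') (lc f (-1) (ann g)) = 0.
Proof.
elim: s f => [|i s IH] f /=.
  exists (fun _ => 0); split => // g' ->.
  apply: inner_zero => eta _; rewrite /ann big1 // => x _; ring.
set u := F i.
have [gf [Sf Hf]] := IH f.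
have [gu [Su Hu]] := IH (ann (F i)).
set hf := lc f (-1) (ann gf).
set hv := lc (ann u) (-1) (ann gu).
have Hufw : forall w, inner alpha k.+1 (ann u) w = inner alpha k.+1 hv w + inner alpha k.+1 (ann gu) w.
  by move=> w; rewrite /hv inner_lcl; ring.
have [E0|N0] := eqVneq (inner alpha k.+1 hv hv) 0.
  have Z := inner_self0 E0.
  exists gf; split.
    exists 0, gf; split => //.
    by apply: functional_extensionality => e; rewrite /lc; ring.
  move=> g' [a [g1 [S1 ->]]]; rewrite ann_lc inner_lcl Hf // Hufw Hf //.
  by rewrite (inner_zero _ Z); ring.
set t := inner alpha k.+1 hv hf / inner alpha k.+1 hv hv.
exists (lc gf t (lc u (-1) gu)); split.
  exists t, (lc gf (-t) gu); split; first exact: Span_lc.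
  by apply: functional_extensionality => e; rewrite /lc; ring.
have -> : lc f (-1) (ann (lc gf t (lc u (-1) gu))) = lc hf (-t) hv.
  rewrite !ann_lc; apply: functional_extensionality => e; rewrite /hf /hv /lc; ring.
move=> g' [a [g1 [S1 ->]]].
rewrite ann_lc inner_lcl !(inner_lcr _ _ hf) !Hufw Hf // Hu // Hf // Hu //.
rewrite /t; field.
exact: N0.
Qed.

End S5.

Unset Implicit Arguments. Set Strict Implicit.

Theorem proposition3p1 (R : realFieldType) (V : finType) (alpha : V -> R)
  (alpha_pos : forall x, 0 < alpha x) (k : nat) (k_pos : (0 < k)%N) :
  (* (a) adjointness relation *)
  (forall (f g : conf V -> R),
     inner alpha k (ann g) f
     = k%:R / (abs_alpha alpha + k%:R - 1) * inner alpha k.-1 g (cre alpha f))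
  /\
  (* (b) L^2(mu_{alpha,k}) = Im a_k (+) Ker a^dagger_{k-1}, orthogonal direct sum *)
  ((forall (g h : conf V -> R),
      (forall xi, inXi k.-1 xi -> cre alpha h xi = 0) ->
      inner alpha k (ann g) h = 0)
   /\
   (forall (g : conf V -> R),
      (forall xi, inXi k.-1 xi -> cre alpha (ann g) xi = 0) ->
      forall eta, inXi k eta -> ann g eta = 0)
   /\
   (forall (f : conf V -> R), exists (g h : conf V -> R),
      (forall xi, inXi k.-1 xi -> cre alpha h xi = 0) /\
      (forall eta, inXi k eta -> f eta = ann g eta + h eta))).
Proof.
case: k k_pos => // k _ /=.
have PA := partA alpha_pos k.
split; first by move=> f g; apply: PA.
split.
  move=> g h Hh; rewrite PA inner_sym (inner_zero alpha _ Hh) mulr0 //.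
split.
  move=> g Hg; apply: (inner_self0 alpha_pos).
  by rewrite PA inner_sym (inner_zero alpha _ Hg) mulr0.
move=> f.
pose delta (e : {ffun V -> 'I_k.+1}) : conf V -> R :=
  fun eta => if eta == conv e then 1 else 0.
have [g [Sg Hg]] := GS alpha_pos delta k (enum {ffun V -> 'I_k.+1}) f.
exists g, (lc f (-1) (ann g)); split; last first.
  by move=> eta _; rewrite /lc; ring.
move=> xi Hxi.
case: (pickP (@predT V)) => [x0 _ | V0]; last first.
  by rewrite /cre big1 // => x; have := V0 x.
have hA : 0 < abs_alpha alpha by apply: lt_le_trans (abs_alpha_ge alpha_pos x0).
have [e He] := conv_surj Hxi.
have Hm : e \in enum {ffun V -> 'I_k.+1} by rewrite mem_enum.
have := Hg (delta e) (Span_mem delta Hm).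
rewrite PA /inner.
rewrite (@sumXi_ext _ _ k _ (fun eta => if eta == xi then mu alpha k eta * cre alpha (lc f (-1) (ann g)) eta else 0)); last first.
  by move=> eta; rewrite /delta He; case: ifP => _; rewrite ?mulr1 ?mulr0 ?mul0r.
rewrite sumXi_delta // => /eqP.
rewrite mulf_eq0 => /orP [|].
  rewrite mulf_eq0 invr_eq0 pnatr_eq0 /= => H.
  exfalso; move: H; rewrite gt_eqF //.
  have := ler0n R k; rewrite -natr1; lra.
rewrite mulf_eq0 (gt_eqF (mu_gt0 alpha_pos k xi hA)) /=.
by move/eqP.
Qed.
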